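(* Let $(M,\circ,\mathrm{OR})$ be a free $\mathbb{D}$-module of rank 3 with scalar product and orientation, and let $z_1,z_2\in M\setminus\epsilon M$. Then $z_1$ and $z_2$ are proportional (i.e. $z_1=\lambda z_2$ for some $\lambda\in\mathbb{D}$) if and only if $z_1\times z_2=0$.
   Context: $\mathbb{D}=\{a+\epsilon b: a,b\in\mathbb{R}\}$, $\epsilon^2=0$. Scalar product: symmetric $\mathbb{D}$-bilinear $\circ:M\times M\to\mathbb{D}$ with $\mathfrak{Re}(x\circ x)\ge0$, equality iff $x\in\epsilon M$; orientation: one of the two classes of ordered bases under $\{b'_j=A_{jk}b_k\}\sim\{b_k\}$ iff $\det\mathfrak{Re}(A)>0$. Cross product: $x\times y=x^iy^j\epsilon_{ijk}m_k$ where $x=x^im_i$, $y=y^im_i$ in any positive orthonormal basis $\{m_i\}$ ($m_i\circ m_j=\delta_{ij}$). *)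

(* Defs.v *)
From HB Require Import structures.
From mathcomp Require Import all_boot all_order all_algebra.
From mathcomp Require Import reals.
From Stdlib Require Import ClassicalEpsilon.
From mathcomp Require Import ring.
Set Implicit Arguments. Unset Strict Implicit. Unset Printing Implicit Defensive.
Import Order.TTheory GRing.Theory Num.Theory.
Local Open Scope ring_scope.

(* ---- Dual numbers a + eps b, represented as pairs (a, b) ---- *)
Definition dual (R : realType) : Type := (R * R)%type.

Section Dual.
Variable R : realType.
HB.instance Definition _ := GRing.Zmodule.copy (dual R) (R * R)%type.

Definition dual_one : dual R := (1, 0).
Definition dual_mul (x y : dual R) : dual R :=
  (x.1 * y.1, x.1 * y.2 + x.2 * y.1).

Lemma dual_mulA : associative dual_mul.
Proof. move=> [a b] [c d] [e f]; rewrite /dual_mul /=; congr pair; simpl; ring. Qed.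
Lemma dual_mulC : commutative dual_mul.
Proof. by move=> [a b] [c d]; rewrite /dual_mul /=; congr pair; ring. Qed.
Lemma dual_mul1r : left_id dual_one dual_mul.
Proof. by move=> [a b]; rewrite /dual_mul /=; congr pair; ring. Qed.
Lemma dual_mulDl : left_distributive dual_mul +%R.
Proof. move=> [a b] [c d] [e f]; rewrite /dual_mul /=; congr pair; simpl; ring. Qed.
Lemma dual_oner_neq0 : dual_one != 0.
Proof. by rewrite /dual_one xpair_eqE oner_eq0. Qed.

HB.instance Definition _ := GRing.Zmodule_isComNzRing.Build (dual R)
  dual_mulA dual_mulC dual_mul1r dual_mulDl dual_oner_neq0.
End Dual.

Definition Re {R : realType} (x : dual R) : R := x.1.
Definition eps {R : realType} : dual R := (0, 1).

Section Module.
Variables (R : realType) (M : lmodType (dual R)).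

Definition in_epsM (x : M) : Prop := exists y : M, x = eps *: y.

Definition is_basis (m : 'I_3 -> M) : Prop :=
  forall x : M, exists! c : 'I_3 -> dual R, x = \sum_i c i *: m i.

Definition scalar_product (sp : M -> M -> dual R) : Prop :=
  [/\ (forall x y, sp x y = sp y x),
      (forall a x y z, sp (a *: x + y) z = a * sp x z + sp y z),
      (forall x, 0 <= Re (sp x x)) &
      (forall x, Re (sp x x) = 0 <-> in_epsM x)].

Definition same_orientation (b b' : 'I_3 -> M) : Prop :=
  forall A : 'M[dual R]_3,
    (forall j, b' j = \sum_k A j k *: b k) -> 0 < \det (map_mx Re A).

Definition orientation (OR : ('I_3 -> M) -> Prop) : Prop :=
  exists b0, is_basis b0 /\
    forall b, OR b <-> (is_basis b /\ same_orientation b0 b).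

Definition pos_orthonormal (sp : M -> M -> dual R) (OR : ('I_3 -> M) -> Prop)
  (m : 'I_3 -> M) : Prop :=
  OR m /\ forall i j, sp (m i) (m j) = (i == j)%:R.

(* coordinates of x in the basis m (the unique ones when m is a basis) *)
Definition coords (m : 'I_3 -> M) (x : M) : 'I_3 -> dual R :=
  epsilon (inhabits (fun _ => 0)) (fun c => x = \sum_i c i *: m i).

Definition levi (i j k : 'I_3) : int :=
  if [&& i != j, j != k & k != i] then
    (if (j : nat) == (i.+1 %% 3)%N then 1 else -1)
  else 0.

Definition cross (m : 'I_3 -> M) (x y : M) : M :=
  \sum_k (\sum_i \sum_j coords m x i * coords m y j * (levi i j k)%:~R) *: m k.
End Module.

(* Main.v *)
Require Import Defs.
From HB Require Import structures.
From mathcomp Require Import all_boot all_order all_algebra.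
From mathcomp Require Import reals.
From mathcomp Require Import ring.
Import Order.TTheory GRing.Theory Num.Theory.
Local Open Scope ring_scope.
Set Implicit Arguments. Unset Strict Implicit.
From Stdlib Require Import ClassicalEpsilon.

Notation i1 := (lift ord0 (ord0 : 'I_2) : 'I_3).
Notation i2 := (lift ord0 (lift ord0 (ord0 : 'I_1)) : 'I_3).

Lemma comp_ex (R : realType) (x y : 'I_3 -> dual R) :
  [/\ \sum_i \sum_j x i * y j * (levi i j ord0)%:~R = x i1 * y i2 - x i2 * y i1,
      \sum_i \sum_j x i * y j * (levi i j i1)%:~R = x i2 * y ord0 - x ord0 * y i2 &
      \sum_i \sum_j x i * y j * (levi i j i2)%:~R = x ord0 * y i1 - x i1 * y ord0].
Proof.
rewrite !big_ord_recl !big_ord0 /levi /=.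
split; ring.
Qed.

Lemma dmul (R : realType) (a b c d : R) : ((a, b) : dual R) * (c, d) = (a*c, a*d+b*c).
Proof. by []. Qed.

Lemma ord3_cases (k : 'I_3) : k = ord0 \/ k = i1 \/ k = i2.
Proof.
case: k => [[|[|[|k]]] Hk]; [left|right;left|right;right|by []]; exact: val_inj.
Qed.

Lemma fst_mul (R : realType) (x y : dual R) : (x * y).1 = x.1 * y.1.
Proof. by []. Qed.

Definition dinv (R : realType) (y : dual R) : dual R := (1 / y.1, - y.2 / (y.1 * y.1)).

Lemma dinvK (R : realType) (y : dual R) : y.1 != 0 -> y * dinv y = 1.
Proof.
case: y => a b /= Ha; rewrite /dinv /= dmul; congr pair => /=.
  by rewrite mul1r divff.
by field.
Qed.

Lemma key_case (R : realType) (a b c p q r : dual R) :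
  a * q = b * p -> b * r = c * q -> c * p = a * r -> a.1 != 0 ->
  (p.1 != 0 \/ q.1 != 0 \/ r.1 != 0) ->
  exists l, a = l * p /\ b = l * q /\ c = l * r.
Proof.
move=> e1 e2 e3 Ha Hy.
have Hp : p.1 != 0.
  apply/negP => /eqP Hp0.
  have Hq : q.1 = 0.
    have := congr1 fst e1; rewrite !fst_mul Hp0 mulr0 => /eqP.
    by rewrite mulf_eq0 (negbTE Ha) => /eqP.
  have Hr : r.1 = 0.
    have := congr1 fst e3; rewrite !fst_mul Hp0 mulr0 => /esym/eqP.
    by rewrite mulf_eq0 (negbTE Ha) => /eqP.
  by move: Hy; rewrite Hp0 Hq Hr eqxx; case=> [|[]].
exists (a * dinv p); split; last split.
- by rewrite -mulrA (mulrC (dinv p)) dinvK // mulr1.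
- by rewrite -mulrA (mulrC (dinv p)) mulrA e1 -mulrA dinvK // mulr1.
- by rewrite -mulrA (mulrC (dinv p)) mulrA -e3 -mulrA dinvK // mulr1.
Qed.

Lemma key3 (R : realType) (a b c p q r : dual R) :
  a * q = b * p -> b * r = c * q -> c * p = a * r ->
  (a.1 != 0 \/ b.1 != 0 \/ c.1 != 0) ->
  (p.1 != 0 \/ q.1 != 0 \/ r.1 != 0) ->
  exists l, a = l * p /\ b = l * q /\ c = l * r.
Proof.
move=> e1 e2 e3 [Ha|[Hb|Hc]] Hy.
- exact: key_case.
- have [|l [? [? ?]]] := key_case e2 e3 e1 Hb; first by case: Hy => [|[]]; auto.
  by exists l.
- have [|l [? [? ?]]] := key_case e3 e1 e2 Hc; first by case: Hy => [|[]]; auto.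
  by exists l.
Qed.

Section Main.
Variables (R : realType) (M : lmodType (dual R)) (m : 'I_3 -> M).
Hypothesis Hb : is_basis m.

Lemma coordsP (x : M) : x = \sum_i coords m x i *: m i.
Proof.
have [c [Hc _]] := Hb x.
rewrite /coords; apply: (epsilon_spec (inhabits (fun _ => 0)) (fun c => x = \sum_i c i *: m i)).
by exists c.
Qed.

Lemma coords_uniq (x : M) c : x = \sum_i c i *: m i -> coords m x = c.
Proof.
move=> H; have [c0 [_ U]] := Hb x.
by rewrite -(U _ (coordsP x)) (U _ H).
Qed.

Lemma not_eps (z : M) : ~ in_epsM z ->
  (coords m z ord0).1 != 0 \/ (coords m z i1).1 != 0 \/ (coords m z i2).1 != 0.
Proof.
move=> Hz.
case: (eqVneq (coords m z ord0).1 0) => [H0|]; last by left.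
case: (eqVneq (coords m z i1).1 0) => [H1|]; last by right; left.
case: (eqVneq (coords m z i2).1 0) => [H2|]; last by right; right.
exfalso; apply: Hz; exists (\sum_i (((coords m z i).2, 0) : dual R) *: m i).
rewrite scaler_sumr {1}(coordsP z); apply: eq_bigr => i _; rewrite scalerA; congr (_ *: _).
have Hi : (coords m z i).1 = 0 by case: (ord3_cases i) => [->|[->|->]].
move: (coords m z i) Hi => [a b] /= ->.
by rewrite /eps dmul mul0r mulr0 mul1r add0r.
Qed.

End Main.

Lemma sc0 (R : realType) (M : lmodType (dual R)) (c : dual R) (v : M) : c = 0 -> c *: v = 0.
Proof. by move=> ->; rewrite scale0r. Qed.

Unset Implicit Arguments. Set Strict Implicit.

Theorem proposition13 (R : realType) (M : lmodType (dual R))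
  (sp : M -> M -> dual R) (OR : ('I_3 -> M) -> Prop)
  (Hfree : exists b : 'I_3 -> M, is_basis b)
  (Hsp : scalar_product sp) (HOR : orientation OR)
  (m : 'I_3 -> M) (Hm : pos_orthonormal sp OR m)
  (z1 z2 : M) (Hz1 : ~ in_epsM z1) (Hz2 : ~ in_epsM z2) :
  (exists lambda : dual R, z1 = lambda *: z2) <-> cross m z1 z2 = 0.
Proof.
have Hb : is_basis m.
  case: HOR => b0 [_ Hiff]; exact: (proj1 ((Hiff m).1 Hm.1)).
set x := coords m z1; set y := coords m z2.
have [A B C] := comp_ex x y.
split.
- move=> [l Hl].
  have Ex : x = (fun i => l * y i).
    apply: coords_uniq => //; rewrite Hl {1}(coordsP Hb z2) scaler_sumr.
    by apply: eq_bigr => i _; rewrite scalerA.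
  rewrite /cross -/x -/y; apply: big1 => k _.
  case: (ord3_cases k) => [->|[->|->]]; rewrite ?A ?B ?C Ex /=.
  + by apply: (@sc0 R M _ (m ord0)); ring.
  + by apply: (@sc0 R M _ (m i1)); ring.
  + by apply: (@sc0 R M _ (m i2)); ring.
- rewrite /cross -/x -/y => H0.
  have [c0 [_ U]] := Hb 0.
  have Z : (fun k => \sum_i \sum_j x i * y j * (levi i j k)%:~R) = (fun _ => 0).
    rewrite -(U _ (esym H0)); apply: U.
    by rewrite big1 // => k _; rewrite scale0r.
  have Zk k := congr1 (fun f => f k) Z; simpl in Zk.
  have e1 := Zk ord0; have e2 := Zk i1; have e3 := Zk i2.
  rewrite ?A ?B ?C in e1 e2 e3.
  move/eqP: e1; rewrite subr_eq0 => /eqP e1.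
  move/eqP: e2; rewrite subr_eq0 => /eqP e2.
  move/eqP: e3; rewrite subr_eq0 => /eqP e3.
  have [l [E0 [E1 E2]]] := key3 e3 e1 e2 (not_eps Hb Hz1) (not_eps Hb Hz2).
  exists l; rewrite (coordsP Hb z1) {1}(coordsP Hb z2) -/x -/y scaler_sumr.
  rewrite !big_ord_recl !big_ord0 !scalerA.
  by rewrite E0 E1 E2.
Qed.
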